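(* Let $\mathcal{H}=\mathcal{H}_{\mathcal{Y}}\times\mathcal{H}_{n+1}$ be closed under scaling, let $c\in(0,1)$, let $\ell$ be a loss on $\mathcal{H}_{\mathcal{Y}}\times\mathcal{X}\times\mathcal{Y}$, and let $\Phi\colon\mathbb{R}\to\mathbb{R}$ be a decreasing function with $\lim_{t\to+\infty}\Phi(t)=0$ and $\Phi(t)\ge\mathbb{1}_{t\le0}$ for all $t\in\mathbb{R}$. Let $\mathcal{D}$ be a distribution over $\mathcal{X}\times\mathcal{Y}$, and assume $\hat h=(\hat h_{\mathcal{Y}},\hat h_{n+1})\in\mathcal{H}$ satisfies $\mathcal{E}_{\ell}(\hat h_{\mathcal{Y}})=\inf_{h_{\mathcal{Y}}\in\mathcal{H}_{\mathcal{Y}}}\mathcal{E}_{\ell}(h_{\mathcal{Y}})$ and $\mathcal{E}_{\ell_{\hat h_{\mathcal{Y}}}}(\hat h_{n+1})=\inf_{h=(h_{\mathcal{Y}},h_{n+1})\in\mathcal{H}}\mathcal{E}_{\ell_{h_{\mathcal{Y}}}}(h_{n+1})$. If there exists $h^*=(h^*_{\mathcal{Y}},h^*_{n+1})\in\mathcal{H}$ with $\mathcal{E}_{\mathsf{L}_{\mathrm{abs}}}(h^* )=0$, then $\mathcal{E}_{\mathsf{L}_{\mathrm{abs}}}(\hat h)=0$.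
   Context: Let $\mathcal{X}$ be an input space and $\mathcal{Y}=\{1,\dots,n\}$, $n\ge2$. $\mathcal{H}_{\mathcal{Y}}$ is a set of functions $h_{\mathcal{Y}}\colon\mathcal{X}\times\mathcal{Y}\to\mathbb{R}$ and $\mathcal{H}_{n+1}$ a set of functions $h_{n+1}\colon\mathcal{X}\to\mathbb{R}$; a pair $h=(h_{\mathcal{Y}},h_{n+1})$ is identified with the function on $\mathcal{X}\times(\mathcal{Y}\cup\{n+1\})$ given by $h(x,y)=h_{\mathcal{Y}}(x,y)$ for $y\in\mathcal{Y}$ and $h(x,n+1)=h_{n+1}(x)$. $\mathcal{H}$ is closed under scaling if $\alpha h\in\mathcal{H}$ for all $h\in\mathcal{H}$ and $\alpha\in\mathbb{R}$. $\mathsf{h}_{\mathcal{Y}}(x)=\operatorname{argmax}_{y\in\mathcal{Y}}h_{\mathcal{Y}}(x,y)$ (ties broken by a fixed deterministic rule). The predicted label $\mathsf{h}(x)$ is $n+1$ if $h_{n+1}(x)\ge\max_{y\in\mathcal{Y}}h_{\mathcal{Y}}(x,y)$, and $\mathsf{h}_{\mathcal{Y}}(x)$ otherwise. The abstention loss with constant cost $c$ is $\mathsf{L}_{\mathrm{abs}}(h,x,y)=\mathbb{1}_{\mathsf{h}(x)\neq y}\mathbb{1}_{\mathsf{h}(x)\neq n+1}+c\,\mathbb{1}_{\mathsf{h}(x)=n+1}$. For fixed $h_{\mathcal{Y}}$, the second-stage surrogate is $\ell_{h_{\mathcal{Y}}}(h_{n+1},x,y)=\mathbb{1}_{\mathsf{h}_{\mathcal{Y}}(x)\neq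 y}\,\Phi\big(h_{n+1}(x)-\max_{y'\in\mathcal{Y}}h_{\mathcal{Y}}(x,y')\big)+c\,\Phi\big(\max_{y'\in\mathcal{Y}}h_{\mathcal{Y}}(x,y')-h_{n+1}(x)\big)$. For a loss $\mathsf{L}$, $\mathcal{E}_{\mathsf{L}}(g)=\mathbb{E}_{(x,y)\sim\mathcal{D}}[\mathsf{L}(g,x,y)]$. *)

(* Defs.v *)
From HB Require Import structures.
From mathcomp Require Import all_boot all_order all_algebra.
From mathcomp Require Import all_classical all_reals all_analysis.
Set Implicit Arguments. Unset Strict Implicit. Unset Printing Implicit Defensive.
Import Order.TTheory GRing.Theory Num.Theory.
Local Open Scope ring_scope.
Local Open Scope classical_set_scope.

(* Label set Y = {1,...,n}, represented by 0,...,n-1.  Under the standing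
   hypothesis 2 <= n, 'I_n.-1.+1 is exactly 'I_n; the .-1.+1 form only
   provides the default element ord0 needed for the pointed structure. *)
Definition label (n : nat) : Type := 'I_n.-1.+1.
HB.instance Definition _ n := Finite.on (label n).
HB.instance Definition _ n := isPointed.Build (label n) (@ord0 n.-1).
Section disc.
Variable n : nat.
HB.instance Definition _ := @isMeasurable.Build default_measure_display
  (label n) discrete_measurable (@discrete_measurable0 _)
  (@discrete_measurableC _) (@discrete_measurableU _).
End disc.

Section defs.
Variables (R : realType) (X : Type) (n : nat).

Definition hmax (hY : X -> label n -> R) (x : X) : R :=
  \big[Num.max/hY x ord0]_(y : label n) hY x y.

Definition hargmax (hY : X -> label n -> R) (x : X) : label n :=
  [arg min_(i < ord0 | hY x i == hmax hY x) (i : nat)].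

(* predicted label of h = (h_Y, h_{n+1}); None stands for the abstention label n+1 *)
Definition hpred (hY : X -> label n -> R) (hn : X -> R) (x : X) : option (label n) :=
  if hmax hY x <= hn x then None else Some (hargmax hY x).

Definition Labs (c : R) (hY : X -> label n -> R) (hn : X -> R) (x : X) (y : label n) : R :=
  ((hpred hY hn x != Some y) && (hpred hY hn x != None))%:R
  + c * (hpred hY hn x == None)%:R.

Definition surr2 (Phi : R -> R) (c : R) (hY : X -> label n -> R) (hn : X -> R)
  (x : X) (y : label n) : R :=
  (hargmax hY x != y)%:R * Phi (hn x - hmax hY x) + c * Phi (hmax hY x - hn x).
End defs.

Definition expL (R : realType) (d : measure_display) (X : measurableType d) (n : nat)
  (D : probability (X * label n)%type R) (L : X -> label n -> R) : \bar R :=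
  (\int[D]_z (L z.1 z.2)%:E)%E.

(* Main.v *)
Require Import Defs.
From HB Require Import structures.
From mathcomp Require Import all_boot all_order all_algebra.
From mathcomp Require Import all_classical all_reals all_analysis.
From mathcomp Require Import measurable_realfun.
Import Order.TTheory GRing.Theory Num.Theory.
Local Open Scope ring_scope.
Local Open Scope classical_set_scope.

Section H.
Context (R : realType) (d : measure_display) (X : measurableType d) (n : nat).

Lemma bool_mfun (f : bool -> R) : measurable_fun setT f.
Proof. by move=> _ A _; exact: I. Qed.

Lemma bool_mfunb (f : bool -> bool) : measurable_fun setT f.
Proof. by move=> _ A _; exact: I. Qed.

Lemma mfun_natR (b : X -> bool) : measurable_fun setT b ->
  measurable_fun setT (fun x => (b x)%:R : R).
Proof. move=> mb; exact: (measurableT_comp (bool_mfun (fun b : bool => b%:R)) mb). Qed.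

Lemma mfun_negb (b : X -> bool) : measurable_fun setT b ->
  measurable_fun setT (fun x => ~~ b x).
Proof. move=> mb; exact: (measurableT_comp (bool_mfunb negb) mb). Qed.

Lemma mfun_big_max (I : Type) (s : seq I) (F : I -> X -> R) (a : X -> R) :
  measurable_fun setT a -> (forall i, measurable_fun setT (F i)) ->
  measurable_fun setT (fun x => \big[Num.max/a x]_(i <- s) F i x).
Proof.
move=> ma mF; elim: s => [|i s IH].
  by under eq_fun do rewrite big_nil.
under eq_fun do rewrite big_cons.
exact: measurable_maxr.
Qed.

Lemma mfun_all (I : eqType) (s : seq I) (B : I -> X -> bool) :
  (forall i, measurable_fun setT (B i)) ->
  measurable_fun setT (fun x => all (fun i => B i x) s).
Proof.
move=> mB; elim: s => [|i s IH] /=; first exact: measurable_cst.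
exact: measurable_and.
Qed.

Lemma mfun_prod (F : X -> label n -> R) :
  (forall y, measurable_fun setT (F ^~ y)) ->
  measurable_fun setT (fun z : X * label n => F z.1 z.2).
Proof.
move=> mF _ A mA; rewrite setTI.
have -> : (fun z : X * label n => F z.1 z.2) @^-1` A =
    \bigcup_(y in setT) ((F ^~ y) @^-1` A `*` [set y]).
  apply/seteqP; split => [[x y] /= h|[x y] [y' _ [/= h ->]]]; last exact: h.
  by exists y.
apply: fin_bigcup_measurable => [|y _]; first exact: finite_finset.
apply: measurableX; last exact: I.
by have := mF y measurableT A mA; rewrite setTI.
Qed.

Lemma hmax_attained (hY : X -> label n -> R) x : exists i, hY x i = hmax hY x.
Proof.
rewrite /hmax; set a := hY x ord0.
suff : forall s, \big[Num.max/a]_(i <- s) hY x i = a \/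
                 exists i, hY x i = \big[Num.max/a]_(i <- s) hY x i.
  by case/(_ (index_enum (label n))) => [->|//]; exists ord0.
elim => [|i s IH]; first by left; rewrite big_nil.
rewrite big_cons maxEle; case: ifP => _; [exact: IH|by right; exists i].
Qed.

Lemma hargmaxP (hY : X -> label n -> R) x y :
  (hargmax hY x == y) = (hY x y == hmax hY x) &&
     all (fun i : label n => (i < y)%N ==> (hY x i != hmax hY x)) (index_enum (label n)).
Proof.
rewrite /hargmax /arg_min /extremum.
case: pickP => [i /andP[Pi /'forall_implyP/= min_i] | no_i] /=.
  apply/idP/idP.
    move/eqP<-; rewrite Pi /=; apply/allP => j _; apply/implyP => ji.
    by apply/negP => Pj; have := min_i j Pj; rewrite leqNgt ji.
  case/andP => Py /allP H; have iy := min_i y Py.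
  apply/eqP/val_inj/eqP; rewrite eqn_leq iy /= leqNgt; apply/negP => yi.
  by have := H i (mem_index_enum i); rewrite yi Pi.
exfalso; have [i1 Pi1] := hmax_attained hY x.
have Pi1' : hY x i1 == hmax hY x by apply/eqP.
case: (@arg_minnP _ i1 (fun i => hY x i == hmax hY x) (fun i => nat_of_ord i) Pi1') => j Pj minj.
have := no_i j; rewrite /= Pj /=; move/negP; apply.
by apply/'forall_implyP => k Pk; exact: minj.
Qed.

Lemma mfun_hmax (hY : X -> label n -> R) :
  (forall y, measurable_fun setT (hY ^~ y)) -> measurable_fun setT (hmax hY).
Proof. by move=> mY; apply: mfun_big_max. Qed.

Lemma mfun_hargmax (hY : X -> label n -> R) y :
  (forall y, measurable_fun setT (hY ^~ y)) ->
  measurable_fun setT (fun x => hargmax hY x == y).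
Proof.
move=> mY.
rewrite (_ : (fun x => _) = fun x => (hY x y == hmax hY x) &&
     all (fun i : label n => (i < y)%N ==> (hY x i != hmax hY x)) (index_enum (label n))); last first.
  by apply/funext => x; rewrite hargmaxP.
apply: measurable_and; first by apply: measurable_fun_eqr; [exact: mY|exact: mfun_hmax].
apply: mfun_all => i; case: (i < y)%N => /=; last exact: measurable_cst.
by apply: mfun_negb; by apply: measurable_fun_eqr; [exact: mY|exact: mfun_hmax].
Qed.


Lemma LabsE (c : R) (hY : X -> label n -> R) hn x y :
  Labs c hY hn x y = ((~~ (hmax hY x <= hn x)%R) && (hargmax hY x != y))%:R
                     + c * ((hmax hY x <= hn x)%R : bool)%:R.
Proof.
rewrite /Labs /hpred; case: ifP => _ /=; first by [].
by rewrite andbT.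
Qed.

Lemma Labs0 (c : R) (hY : X -> label n -> R) hn x y : 0 < c ->
  Labs c hY hn x y = 0 -> hn x < hmax hY x /\ hargmax hY x = y.
Proof.
move=> c0; rewrite LabsE; have [h|h] := boolP (hmax hY x <= hn x) => /=.
  by rewrite add0r mulr1 => c00; move: c0; rewrite c00 ltxx.
rewrite mulr0 addr0 -ltNge in h * => H; split => //; apply/eqP; move: H.
by case: (_ == _) => //= /eqP; rewrite oner_eq0.
Qed.

Lemma Labs_ge0 (c : R) (hY : X -> label n -> R) hn x y : 0 <= c ->
  0 <= Labs c hY hn x y.
Proof. by move=> c0; rewrite LabsE addr_ge0 ?mulr_ge0. Qed.

Lemma Labs_le_surr2 (Phi : R -> R) (c : R) (hY : X -> label n -> R) hn x y :
  (forall t : R, ((t <= 0)%R : bool)%:R <= Phi t) -> 0 <= c ->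
  Labs c hY hn x y <= surr2 Phi c hY hn x y.
Proof.
move=> Phi_ge c0.
have Phi1 t : t <= 0 -> 1 <= Phi t by move=> h; have := Phi_ge t; rewrite h.
have Phi0 t : 0 <= Phi t.
  by have := Phi_ge t; case: (t <= 0) => /=; [apply: le_trans|].
rewrite LabsE /surr2; have [h|h] := boolP (hmax hY x <= hn x) => /=.
  rewrite add0r mulr1 -[X in X <= _]add0r lerD ?mulr_ge0 //.
  by rewrite -[X in X <= _]mulr1 ler_wpM2l ?Phi1 // subr_le0.
rewrite -ltNge in h.
rewrite mulr0 addr0 -[X in X <= _]addr0 lerD ?mulr_ge0 //.
rewrite -[X in X <= _]mulr1 ler_wpM2l //; apply: Phi1.
by rewrite subr_le0 ltW.
Qed.

Lemma surr2_ge0 (Phi : R -> R) (c : R) (hY : X -> label n -> R) hn x y :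
  (forall t : R, ((t <= 0)%R : bool)%:R <= Phi t) -> 0 <= c ->
  0 <= surr2 Phi c hY hn x y.
Proof.
move=> Phi_ge c0; apply: le_trans (Labs_le_surr2 Phi c hY hn x y Phi_ge c0).
exact: Labs_ge0.
Qed.

Lemma hmax_scale (a : R) (hY : X -> label n -> R) x : 0 <= a ->
  hmax (fun x y => a * hY x y) x = a * hmax hY x.
Proof.
move=> a0; rewrite /hmax.
rewrite (big_morph (fun v => a * v) (id2 := hY x ord0) (id1 := a * hY x ord0) (op1 := Num.max) (op2 := Num.max)) //.
by move=> u v; rewrite maxr_pMr.
Qed.

Lemma hargmax_scale (a : R) (hY : X -> label n -> R) x : 0 < a ->
  hargmax (fun x y => a * hY x y) x = hargmax hY x.
Proof.
move=> a0; rewrite /hargmax hmax_scale ?ltW //.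
congr (arg_min _ _ _); apply/funext => i.
by rewrite (inj_eq (mulfI _)) // gt_eqF.
Qed.

Lemma mfun_Labs (c : R) (hY : X -> label n -> R) hn :
  (forall y, measurable_fun setT (hY ^~ y)) -> measurable_fun setT hn ->
  measurable_fun setT (fun z : X * label n => Labs c hY hn z.1 z.2).
Proof.
move=> mY mn; apply: mfun_prod => y.
under eq_fun do rewrite LabsE.
apply: measurable_funD; last first.
  apply: measurable_funM; first exact: measurable_cst.
  by apply: mfun_natR; apply: measurable_fun_ler => //; exact: mfun_hmax.
apply: mfun_natR; apply: measurable_and.
  by apply: mfun_negb; apply: measurable_fun_ler => //; exact: mfun_hmax.
by apply: mfun_negb; exact: mfun_hargmax.
Qed.

Lemma mfun_surr2 (Phi : R -> R) (c : R) (hY : X -> label n -> R) hn :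
  (forall s t, s <= t -> Phi t <= Phi s) ->
  (forall y, measurable_fun setT (hY ^~ y)) -> measurable_fun setT hn ->
  measurable_fun setT (fun z : X * label n => surr2 Phi c hY hn z.1 z.2).
Proof.
move=> Phi_decr mY mn; apply: mfun_prod => y; rewrite /surr2.
have mPhi : measurable_fun setT Phi.
  by apply: nonincreasing_measurable => // s t st; exact: Phi_decr.
have mh : measurable_fun setT (hmax hY) := mfun_hmax _ mY.
apply: measurable_funD.
  apply: measurable_funM.
    by apply: mfun_natR; apply: mfun_negb; exact: mfun_hargmax.
  by apply: measurableT_comp mPhi _; exact: measurable_funB.
apply: measurable_funM; first exact: measurable_cst.
by apply: measurableT_comp mPhi _; exact: measurable_funB.
Qed.

End H.

Theorem theorem5 (R : realType) (d : measure_display) (X : measurableType d)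
  (n : nat) (hn2 : (2 <= n)%N)
  (HY : set (X -> label n -> R)) (Hn : set (X -> R))
  (Hmeas_Y : forall hY, HY hY -> forall y, measurable_fun setT (fun x => hY x y))
  (Hmeas_n : forall hn, Hn hn -> measurable_fun setT hn)
  (Hscale : forall hY hn (a : R), HY hY -> Hn hn ->
     HY (fun x y => a * hY x y) /\ Hn (fun x => a * hn x))
  (c : R) (hc0 : 0 < c) (hc1 : c < 1)
  (ell : (X -> label n -> R) -> X -> label n -> R)
  (Phi : R -> R)
  (Phi_decr : forall s t, s <= t -> Phi t <= Phi s)
  (Phi_lim : Phi t @[t --> +oo] --> 0)
  (Phi_ge : forall t : R, ((t <= 0)%R : bool)%:R <= Phi t)
  (D : probability (X * label n)%type R)
  (hatY : X -> label n -> R) (hatn : X -> R)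
  (hat_in : HY hatY /\ Hn hatn)
  (hat_first : expL D (ell hatY) = ereal_inf [set expL D (ell hY) | hY in HY])
  (hat_second : expL D (surr2 Phi c hatY hatn)
     = ereal_inf [set expL D (surr2 Phi c h.1 h.2) | h in HY `*` Hn])
  (realizable : exists hsY hsn, [/\ HY hsY, Hn hsn & expL D (Labs c hsY hsn) = 0%E]) :
  expL D (Labs c hatY hatn) = 0%E.
Proof.
have [hsY [hsn [HsY Hsn E0]]] := realizable.
have c0 : 0 <= c := ltW hc0.
have Phi0 t : 0 <= Phi t.
  by have := Phi_ge t; case: (t <= 0) => /=; [apply: le_trans|].
have mL hY hn : HY hY -> Hn hn ->
    measurable_fun setT (fun z : X * label n => Labs c hY hn z.1 z.2).
  by move=> /Hmeas_Y mY /Hmeas_n mn; exact: mfun_Labs.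
have mS hY hn : HY hY -> Hn hn ->
    measurable_fun setT (fun z : X * label n => surr2 Phi c hY hn z.1 z.2).
  by move=> /Hmeas_Y mY /Hmeas_n mn; exact: mfun_surr2.
have aeG : {ae D, forall z : X * label n,
    hsn z.1 < hmax hsY z.1 /\ hargmax hsY z.1 = z.2}.
  have : ae_eq D setT (fun z => (Labs c hsY hsn z.1 z.2)%:E) (cst 0%E).
    apply/(ae_eq_integral_abs _ measurableT); first by apply/measurable_EFinP; exact: (mL _ _ HsY Hsn).
    rewrite -E0 /expL; apply: eq_integral => z _.
    by rewrite gee0_abs // lee_fin; exact: Labs_ge0.
  apply: filterS => z /(_ I) /eqP; rewrite eqe => /eqP.
  exact: Labs0.
pose fk k (z : X * label n) := (surr2 Phi c (fun x y => (k.+1%:R : R) * hsY x y)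
    (fun x => k.+1%:R * hsn x) z.1 z.2)%:E.
have Hk k : HY (fun x y => (k.+1%:R : R) * hsY x y) /\ Hn (fun x => k.+1%:R * hsn x).
  exact: Hscale.
have fkG k z : hsn z.1 < hmax hsY z.1 -> hargmax hsY z.1 = z.2 ->
    fk k z = (c * Phi (k.+1%:R * (hmax hsY z.1 - hsn z.1)))%:E.
  move=> h1 h2; rewrite /fk /surr2 hmax_scale ?hargmax_scale // h2 eqxx.
  by rewrite mul0r add0r mulrBr.
have mfk k : measurable_fun setT (fk k).
  by apply/measurable_EFinP; case: (Hk k) => h1 h2; exact: mS.
have aeconv : {ae D, forall z, setT z -> fk ^~ z @ \oo --> cst 0%E z}.
  apply: filterS aeG => z [h1 h2] _.
  rewrite (_ : fk ^~ z = fun k => (c * Phi (k.+1%:R * (hmax hsY z.1 - hsn z.1)))%:E); last first.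
    by apply/funext => k; rewrite fkG.
  apply: cvg_EFin; first exact: nearW.
  rewrite /comp /= -(mulr0 c); apply: cvgMl_tmp.
  set dl := hmax hsY z.1 - hsn z.1.
  have dl0 : 0 < dl by rewrite subr_gt0.
  apply: (@cvg_comp _ _ _ (fun k : nat => k.+1%:R * dl) Phi _ _ _ _ Phi_lim).
  apply/cvgryPge => A; have := @cvgr_idn R; move/cvgryPge => /(_ (A / dl)).
  apply: filterS => k hk; rewrite ler_pdivrMr // in hk.
  by apply: le_trans hk _; apply: ler_wpM2r; [exact: ltW|rewrite ler_nat].
have aebound : {ae D, forall z k, setT z -> (`|fk k z| <= cst (c * Phi 0)%:E z)%E}.
  apply: filterS aeG => z [h1 h2] k _; rewrite fkG // gee0_abs ?lee_fin ?mulr_ge0 //.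
  rewrite ler_wpM2l // Phi_decr // mulr_ge0 // subr_ge0 ltW //.
have integ : D.-integrable setT (cst (c * Phi 0)%:E).
  exact: finite_measure_integrable_cst.
have [_ _ cvgI] := @dominated_convergence _ _ _ D setT measurableT fk (cst 0%E)
  (cst (c * Phi 0)%:E) mfk (measurable_cst _) aeconv integ aebound.
rewrite integral0 in cvgI.
have Hle : (expL D (surr2 Phi c hatY hatn) <= 0)%E.
  rewrite -(cvg_lim _ cvgI) //; apply: lime_ge.
    by apply/cvg_ex; eexists; exact: cvgI.
  apply: nearW => k; rewrite hat_second; apply: ereal_inf_lbound.
  by exists ((fun x y => k.+1%:R * hsY x y), (fun x => k.+1%:R * hsn x)); first exact: Hk.
apply/eqP; rewrite eq_le; apply/andP; split; last first.
  by apply: integral_ge0 => z _; rewrite lee_fin; exact: Labs_ge0.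
apply: le_trans Hle; apply: ge0_le_integral => //.
- by move=> z _; rewrite lee_fin; exact: Labs_ge0.
- by apply/measurable_EFinP; case: hat_in => h1 h2; exact: mL.
- by apply/measurable_EFinP; case: hat_in => h1 h2; exact: mS.
- by move=> z _; rewrite lee_fin; exact: Labs_le_surr2.
Qed.
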